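(* Let $k\in\mathbb{Z}$. For every integer $n\ge 1$, $$\frac{2}{n}\sum_{m=1}^{n}\frac{1}{m^{k-1}}S_{1}(n,m)=E_{n-1}^{(k)}(1)+E_{n-1}^{(k)}.$$
   Context: For $k\in\mathbb{Z}$, $\mathrm{Ei}_k(x)=\sum_{n=1}^{\infty}\frac{x^n}{n^k(n-1)!}$. The poly-Genocchi polynomials $G_n^{(k)}(x)$ are defined by $\frac{2\,\mathrm{Ei}_k(\log(1+t))}{e^t+1}e^{xt}=\sum_{n=0}^{\infty}G_n^{(k)}(x)\frac{t^n}{n!}$. The poly-Euler polynomials of index $k$ are $E_n^{(k)}(x)=\frac{G_{n+1}^{(k)}(x)}{n+1}$ for $n\ge0$, and $E_n^{(k)}=E_n^{(k)}(0)$. $S_1(n,m)$ denotes the signed Stirling numbers of the first kind: $\frac{(\log(1+t))^m}{m!}=\sum_{n=m}^{\infty}S_1(n,m)\frac{t^n}{n!}$. *)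

(* Defs.v *)
From mathcomp Require Import all_boot all_order all_algebra.
Set Implicit Arguments. Unset Strict Implicit. Unset Printing Implicit Defensive.
Import Order.TTheory GRing.Theory Num.Theory.
Local Open Scope ring_scope.

Section FPS.
Variable R : numFieldType.

Definition fps := nat -> R.

Definition fps_mul (a b : fps) : fps :=
  fun n => \sum_(i < n.+1) a i * b (n - i)%N.

Definition fps_one : fps := fun n => if n == 0%N then 1 else 0.

Fixpoint fps_pow (a : fps) (m : nat) : fps :=
  match m with 0%N => fps_one | m'.+1 => fps_mul a (fps_pow a m') end.

(* multiplicative inverse of a series with a 0 <> 0:
   b_0 = 1/a_0, b_n = -(1/a_0) sum_{j=1}^n a_j b_{n-j} *)
Fixpoint fps_inv_aux (a : fps) (n : nat) : seq R :=
  match n with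
  | 0%N => [:: (a 0%N)^-1]
  | n'.+1 => let s := fps_inv_aux a n' in
      rcons s (- (a 0%N)^-1 * \sum_(i < n'.+1) a i.+1 * nth 0 s (n' - i)%N)
  end.
Definition fps_inv (a : fps) : fps := fun n => nth 0 (fps_inv_aux a n) n.

Definition fps_expx (x : R) : fps := fun n => x ^+ n / (n`!)%:R.

Definition fps_exp1p1 : fps := fun n => (n`!)%:R^-1 + (if n == 0%N then 1 else 0).

Definition fps_log1p : fps :=
  fun n => if n == 0%N then 0 else (-1) ^+ n.-1 / n%:R.

(* Ei_k(log(1+t)) = sum_{m>=1} (log(1+t))^m / (m^k (m-1)!) ;
   the coefficient of t^n only involves m <= n since log(1+t) has no constant term *)
Definition fps_Ei_log1p (k : int) : fps :=
  fun n => \sum_(1 <= m < n.+1)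
             ((m%:R : R) ^ k)^-1 / ((m.-1)`!)%:R * fps_pow fps_log1p m n.

(* Poly-Genocchi polynomials:
   2 Ei_k(log(1+t)) e^{xt} / (e^t+1) = sum_n G_n^{(k)}(x) t^n / n! *)
Definition polyGenocchi (n : nat) (k : int) (x : R) : R :=
  (n`!)%:R *
    fps_mul (fps_mul (fun j => 2 * fps_Ei_log1p k j) (fps_expx x))
            (fps_inv fps_exp1p1) n.

Definition polyEuler (n : nat) (k : int) (x : R) : R :=
  polyGenocchi n.+1 k x / (n.+1)%:R.

Definition stirling1 (n m : nat) : R :=
  (n`!)%:R * (fps_pow fps_log1p m n / (m`!)%:R).

End FPS.

(* Main.v *)
Require Import Defs.
From mathcomp Require Import all_boot all_order all_algebra.
From Stdlib Require Import FunctionalExtensionality.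
From mathcomp Require Import ring.
Import Order.TTheory GRing.Theory Num.Theory.
Local Open Scope ring_scope.

Section Aux.
Variable R : numFieldType.
Implicit Types a b c : fps R.

Definition trunc (N : nat) a : {poly R} := \poly_(i < N.+1) a i.

Lemma mul_trunc N a b n : (n <= N)%N -> fps_mul a b n = (trunc N a * trunc N b)`_n.
Proof.
move=> hn; rewrite coefM /fps_mul; apply: eq_bigr => i _.
rewrite /trunc !coef_poly.
have hi : (i < N.+1)%N by apply: leq_trans (ltn_ord i) _; rewrite ltnS.
have hi2 : (n - i < N.+1)%N by rewrite ltnS; apply: leq_trans (leq_subr _ _) hn.
by rewrite hi hi2.
Qed.

Lemma coefM_ext (p q r : {poly R}) n :
  (forall i, (i <= n)%N -> p`_i = q`_i) -> (p * r)`_n = (q * r)`_n.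
Proof.
move=> h; rewrite !coefM; apply: eq_bigr => i _; rewrite h //.
by rewrite -ltnS.
Qed.

Lemma coefM_extr (p q r : {poly R}) n :
  (forall i, (i <= n)%N -> p`_i = q`_i) -> (r * p)`_n = (r * q)`_n.
Proof. by move=> h; rewrite ![r * _]mulrC; apply: coefM_ext. Qed.

Lemma fps_mulA a b c n :
  fps_mul (fps_mul a b) c n = fps_mul a (fps_mul b c) n.
Proof.
rewrite (mul_trunc n _ _ _ (leqnn n)) (mul_trunc n a _ _ (leqnn n)).
rewrite (@coefM_ext _ (trunc n a * trunc n b)); last first.
  move=> i hi; rewrite /trunc coef_poly ltnS hi.
  by rewrite -/(trunc n a) -/(trunc n b) (mul_trunc n _ _ _ hi).
rewrite (@coefM_extr (trunc n (fps_mul b c)) (trunc n b * trunc n c)); first by rewrite mulrA.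
move=> i hi; rewrite /trunc coef_poly ltnS hi.
by rewrite -/(trunc n b) -/(trunc n c) (mul_trunc n _ _ _ hi).
Qed.

Lemma fps_mulDl a b c n :
  fps_mul (fun j => a j + b j) c n = fps_mul a c n + fps_mul b c n.
Proof. by rewrite /fps_mul -big_split; apply: eq_bigr => i _; rewrite mulrDl. Qed.

Lemma fps_mulDr a b c n :
  fps_mul a (fun j => b j + c j) n = fps_mul a b n + fps_mul a c n.
Proof. by rewrite /fps_mul -big_split; apply: eq_bigr => i _; rewrite mulrDr. Qed.

Lemma fps_mul1r a n : fps_mul a (fps_one R) n = a n.
Proof.
rewrite /fps_mul big_ord_recr /= subnn /fps_one eqxx mulr1 big1 ?add0r // => i _.
by rewrite subn_eq0 leqNgt ltn_ord mulr0.
Qed.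

Lemma size_inv_aux a n : size (fps_inv_aux a n) = n.+1.
Proof. by elim: n => [|n IH] //=; rewrite size_rcons IH. Qed.

Lemma nth_inv_aux a n i : (i <= n)%N -> nth 0 (fps_inv_aux a n) i = fps_inv a i.
Proof.
elim: n => [|n IH].
  by rewrite leqn0 => /eqP ->.
rewrite leq_eqVlt => /orP [/eqP -> //|]; rewrite ltnS => hi.
by rewrite /= nth_rcons size_inv_aux ltnS hi IH.
Qed.

Lemma fps_inv_S a n : fps_inv a n.+1 =
  - (a 0%N)^-1 * \sum_(i < n.+1) a i.+1 * fps_inv a (n - i)%N.
Proof.
rewrite /fps_inv /= nth_rcons size_inv_aux ltnn eqxx; congr (_ * _).
by apply: eq_bigr => i _; rewrite nth_inv_aux // leq_subr.
Qed.

Lemma fps_mulV a n : a 0%N != 0 -> fps_mul a (fps_inv a) n = fps_one R n.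
Proof.
move=> a0; case: n => [|n].
  by rewrite /fps_mul big_ord1 /fps_inv /= mulfV.
rewrite /fps_mul big_ord_recl /= subn0 fps_inv_S mulrA mulrN mulfV // mulN1r.
rewrite /fps_one /=.
by apply/eqP; rewrite addrC subr_eq0; apply/eqP; apply: eq_bigr => i _; rewrite /bump leq0n /= add1n subSS.
Qed.

End Aux.

Theorem corollary2 (R : numFieldType) (k : int) (n : nat) (hn : (1 <= n)%N) :
  2 / (n%:R : R) * \sum_(1 <= m < n.+1) ((m%:R : R) ^ (k - 1))^-1 * stirling1 R n m
  = polyEuler n.-1 k 1 + polyEuler n.-1 k 0.
Proof.
rewrite /polyEuler prednK // -mulrDl /polyGenocchi -mulrDr.
set A := (fun j => 2 * fps_Ei_log1p R k j).
rewrite -fps_mulDl.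
have -> : (fun j => fps_mul A (fps_expx 1) j + fps_mul A (fps_expx 0) j)
        = fps_mul A (fps_exp1p1 R).
  apply: functional_extensionality => j; rewrite -fps_mulDr.
  congr fps_mul; apply: functional_extensionality => i.
  rewrite /fps_expx /fps_exp1p1 expr1n expr0n; case: i => [|i] //=.
  by rewrite fact0 div1r invr1.
  by rewrite mulr0n mul0r !addr0 div1r.
rewrite fps_mulA.
have -> : fps_mul (fps_exp1p1 R) (fps_inv (fps_exp1p1 R)) = fps_one R.
  apply: functional_extensionality => j; apply: fps_mulV.
  by rewrite /fps_exp1p1 /= fact0 invr1 gt_eqF // addr_gt0 ?ltr01.
rewrite (fps_mul1r R A n) /A /fps_Ei_log1p.
have -> : \sum_(1 <= m < n.+1) ((m%:R : R) ^ (k - 1))^-1 * stirling1 R n m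
  = n`!%:R * \sum_(1 <= m < n.+1)
      ((m%:R : R) ^ k)^-1 / (m.-1)`!%:R * fps_pow (fps_log1p R) m n.
  rewrite mulr_sumr; apply: eq_big_nat => m /andP [hm1 _].
rewrite /stirling1.
have m0 : (m%:R : R) != 0 by rewrite pnatr_eq0 -lt0n.
have hk : k = (k - 1) + 1 by rewrite subrK.
have e : (m%:R : R) ^ k = (m%:R : R) ^ (k - 1) * m%:R by rewrite {1}hk exprzDr ?unitfE // expr1z.
rewrite e.
have y0 : (m%:R : R) ^ (k - 1) != 0 by rewrite expfz_neq0.
have -> : (m`!)%:R = (m%:R * (m.-1)`!%:R : R) by rewrite -natrM -{1}(prednK hm1) factS prednK.
have f0 : ((m.-1)`!%:R : R) != 0 by rewrite pnatr_eq0 -lt0n fact_gt0.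
set y := (m%:R : R) ^ (k - 1).
field.
by rewrite f0 m0 y0.
have n0 : (n%:R : R) != 0 by rewrite pnatr_eq0 -lt0n.
by field.
Qed.
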